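(* Let $\pi$ be an algorithmic policy mapping the prediction matrix $\mathbf G=(g_l(X_i))_{i,l}$ to an assignment satisfying the capacity constraints, and suppose that for $P^{\mathcal M}$-almost every realization $(\mathbf x,\mathbf y,\mathbf l)$ of $(\mathbf X,\mathbf Y,\mathbf L)$ we have $\pi(\mathbf g)\in\Pi_{\mathbf x,\mathbf y,\mathbf l}$, where $\mathbf g=(g_l(x_i))$. Then $$\mathbb E_{\mathbf Y\sim P^{\mathcal M;\,do(\mathbf L=\pi(\mathbf G))}}[\mathbf 1^T\mathbf Y]\ \ge\ \mathbb E_{\mathbf Y\sim P^{\mathcal M}}[\mathbf 1^T\mathbf Y],$$ i.e. $\pi$ achieves at least the expected utility of the default policy $\tilde\pi$.
   Context: Setup (structural causal model $\mathcal M$ of a resettlement process). A pool $\mathcal I$ of $n$ refugees is matched to a finite set $\mathcal L$ of $k$ locations, location $l$ having capacity $c_l\in\mathbb N$. Exogenous noise variables $D_i\sim P(D)$ ($i\in\mathcal I$), $V_{i,l}\sim P(V\mid L=l)$ ($i\in\mathcal I,l\in\mathcal L$) and $W\sim P(W)$ are all mutually independent. Endogenous variables: $X_i=f_X(D_i)$, $\mathbf L=\tilde\pi(\mathbf X,W)\in\mathcal L^n$ (default policy $\tilde\pi$), $Y_i=f_Y(D_i,V_{i,L_i})\in\{0,1\}$, $U=\mathbf 1^T\mathbf Y$. A classifier gives maps $g_l:\mathcal X\to[0,1]$. An assignment is a map $\pi:\mathcal I\to\mathcal L$ with $|\{i:\pi_i=l\}|\le c_l$. $\Pi_{\mathbf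 x,\mathbf y,\mathbf l}$ is the set of assignments $\pi$ with $\pi_i=l_i$ for all $i$ with $y_i=1$. The interventional distribution $P^{\mathcal M;do(\mathbf L=\pi(\mathbf G))}$ is obtained by drawing fresh noise, setting $X_i=f_X(D_i)$, $\mathbf G=(g_l(X_i))$, $\mathbf L=\pi(\mathbf G)$, $Y_i=f_Y(D_i,V_{i,L_i})$. *)

(* Defs.v *)
From HB Require Import structures.
From mathcomp Require Import all_boot all_order all_algebra.
From mathcomp Require Import all_classical all_reals all_analysis.
Set Implicit Arguments. Unset Strict Implicit. Unset Printing Implicit Defensive.
Import Order.TTheory GRing.Theory Num.Theory.
Local Open Scope classical_set_scope.
Local Open Scope ring_scope.

(* Refugees are 'I_n, locations are 'I_k. *)

Definition respects_capacity (n k : nat) (c : 'I_k -> nat) (a : 'I_n -> 'I_k) : Prop :=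
  forall l : 'I_k, (#|[set i | a i == l]| <= c l)%N.

(* Pi_{x,y,l}: capacity-respecting assignments keeping every successful
   refugee (y_i = 1) at its realized location l_i.  (x is not used.) *)
Definition Pi_xyl (TX : Type) (n k : nat) (c : 'I_k -> nat)
  (x : 'I_n -> TX) (y : 'I_n -> bool) (l : 'I_n -> 'I_k) (a : 'I_n -> 'I_k) : Prop :=
  respects_capacity c a /\ forall i, y i -> a i = l i.

Section SCM.
Context (R : realType) (TX : Type) (n k : nat).
Context (dD dV dW : measure_display)
        (TD : measurableType dD) (TV : measurableType dV) (TW : measurableType dW).
Context (Omega : Type).
Context (D : 'I_n -> Omega -> TD) (V : 'I_n -> 'I_k -> Omega -> TV) (W : Omega -> TW).
Context (fX : TD -> TX) (fY : TD -> TV -> bool).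

Definition scm_X (w : Omega) : 'I_n -> TX := fun i => fX (D i w).

(* observational (default-policy) locations L = pit(X, W) *)
Definition scm_L (pit : ('I_n -> TX) -> TW -> 'I_n -> 'I_k) (w : Omega) : 'I_n -> 'I_k :=
  pit (scm_X w) (W w).

Definition scm_Y (L : Omega -> 'I_n -> 'I_k) (w : Omega) : 'I_n -> bool :=
  fun i => fY (D i w) (V i (L w i) w).

Definition scm_G (g : 'I_k -> TX -> R) (w : Omega) : 'I_n -> 'I_k -> R :=
  fun i l => g l (scm_X w i).

(* locations under do(L = pi(G)) *)
Definition scm_Ldo (g : 'I_k -> TX -> R)
  (pol : ('I_n -> 'I_k -> R) -> 'I_n -> 'I_k) (w : Omega) : 'I_n -> 'I_k :=
  pol (scm_G g w).

Definition utility (Y : 'I_n -> bool) : R := \sum_(i < n) (Y i)%:R.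
End SCM.

(* Mutual independence of the noise variables D_i, V_{i,l}, W on a
   probability space: the product rule for every choice of measurable sets
   (taking full sets recovers every subfamily). *)
Definition noise_independent (R : realType) (d : measure_display) (Omega : measurableType d)
  (P : probability Omega R) (n k : nat)
  (dD dV dW : measure_display)
  (TD : measurableType dD) (TV : measurableType dV) (TW : measurableType dW)
  (D : 'I_n -> Omega -> TD) (V : 'I_n -> 'I_k -> Omega -> TV) (W : Omega -> TW) : Prop :=
  forall (AD : 'I_n -> set TD) (AV : 'I_n -> 'I_k -> set TV) (AW : set TW),
    (forall i, measurable (AD i)) -> (forall i l, measurable (AV i l)) -> measurable AW ->
    P ((\bigcap_(i in [set: 'I_n]) (D i @^-1` AD i))
       `&` (\bigcap_(il in [set: 'I_n * 'I_k]) (V il.1 il.2 @^-1` AV il.1 il.2))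
       `&` (W @^-1` AW))
    = ((\prod_(i < n) P (D i @^-1` AD i))
       * (\prod_(il : 'I_n * 'I_k) P (V il.1 il.2 @^-1` AV il.1 il.2))
       * P (W @^-1` AW))%E.

(* Main.v *)
Require Import Defs.
From HB Require Import structures.
From mathcomp Require Import all_boot all_order all_algebra.
From mathcomp Require Import all_classical all_reals all_analysis.
From mathcomp Require Import measurable_realfun.
Import Order.TTheory GRing.Theory Num.Theory.
Local Open Scope classical_set_scope.
Local Open Scope ring_scope.

Theorem mainTheorem3
  (R : realType) (d : measure_display) (Omega : measurableType d)
  (P : probability Omega R)
  (n k : nat) (c : 'I_k -> nat)
  (dD dV dW : measure_display)
  (TD : measurableType dD) (TV : measurableType dV) (TW : measurableType dW)
  (TX : Type)
  (* exogenous noise and its distributions P(D), P(V | L = l), P(W) *)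
  (D : 'I_n -> Omega -> TD) (V : 'I_n -> 'I_k -> Omega -> TV) (W : Omega -> TW)
  (PD : probability TD R) (PV : 'I_k -> probability TV R) (PW : probability TW R)
  (mD : forall i, measurable_fun setT (D i))
  (mV : forall i l, measurable_fun setT (V i l))
  (mW : measurable_fun setT W)
  (lawD : forall i (A : set TD), measurable A -> P (D i @^-1` A) = PD A)
  (lawV : forall i l (A : set TV), measurable A -> P (V i l @^-1` A) = PV l A)
  (lawW : forall (A : set TW), measurable A -> P (W @^-1` A) = PW A)
  (indep : noise_independent P D V W)
  (* structural maps, default policy, classifier, algorithmic policy *)
  (fX : TD -> TX) (fY : TD -> TV -> bool)
  (pit : ('I_n -> TX) -> TW -> 'I_n -> 'I_k)
  (g : 'I_k -> TX -> R) (g01 : forall l x, 0 <= g l x <= 1)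
  (pol : ('I_n -> 'I_k -> R) -> 'I_n -> 'I_k)
  (pol_cap : forall G, respects_capacity c (pol G))
  (* the utilities U = 1^T Y are random variables (measurable) *)
  (mU : measurable_fun setT
          (fun w => utility R (scm_Y D V fY (scm_L D W fX pit) w)))
  (mUdo : measurable_fun setT
          (fun w => utility R (scm_Y D V fY (scm_Ldo D fX g pol) w)))
  (* almost surely, pi(g) lies in Pi_{x,y,l} for the realized (x, y, l) *)
  (hPi : {ae P, forall w,
           Pi_xyl c (scm_X D fX w) (scm_Y D V fY (scm_L D W fX pit) w)
                  (scm_L D W fX pit w) (scm_Ldo D fX g pol w)}) :
  (\int[P]_w (utility R (scm_Y D V fY (scm_Ldo D fX g pol) w))%:E
   >= \int[P]_w (utility R (scm_Y D V fY (scm_L D W fX pit) w))%:E)%E.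
Proof.
rewrite /= -/(\int[P]_(w in setT) _) -/(\int[P]_(w in setT) _).
apply: ae_ge0_le_integral => //.
- by move=> w _; rewrite lee_fin /utility sumr_ge0.
- by apply/measurable_EFinP.
- by move=> w _; rewrite lee_fin /utility sumr_ge0.
- by apply/measurable_EFinP.
apply: filterS hPi => w [_ Hy] _.
rewrite lee_fin /utility; apply: ler_sum => i _.
case Yi: (scm_Y D V fY (scm_L D W fX pit) w i) => //=.
move: (Hy i Yi) => Heq.
by move: Yi; rewrite /scm_Y Heq => ->.
Qed.
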